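(* Let $P:\mathbb{R}^d\to\mathbb{R}$ be a positive homogeneous function and let $\mathrm{Sym}(P)=\{O\in\mathrm{End}(\mathbb{R}^d): P(O\xi)=P(\xi)\text{ for all }\xi\in\mathbb{R}^d\}$. Then $\mathrm{Sym}(P)$ is a compact subgroup of the general linear group $\mathrm{GL}(\mathbb{R}^d)$.
   Context: For $E\in\mathrm{End}(\mathbb{R}^d)$ and $t>0$ set $t^E:=\exp(\log(t)E)=\sum_{k\ge 0}\frac{(\log t)^k}{k!}E^k$. A function $P:\mathbb{R}^d\to\mathbb{C}$ is homogeneous with respect to $E$ if $P(t^E\xi)=tP(\xi)$ for all $t>0$, $\xi\in\mathbb{R}^d$; the exponent set $\mathrm{Exp}(P)$ is the set of all such $E$. A real-valued $P$ is positive definite if $P\ge 0$ and $P(\xi)=0$ only when $\xi=0$. A function $P:\mathbb{R}^d\to\mathbb{R}$ is positive homogeneous if it is continuous, positive definite, $\mathrm{Exp}(P)\neq\emptyset$, and its unital level set $S_P=\{\eta\in\mathbb{R}^d:P(\eta)=1\}$ is compact. (Known fact that may be used: a continuous positive definite $P$ with nonempty exponent set is positive homogeneous iff $\lim_{|\xi|\to\infty}P(\xi)=\infty$, iff $\lim_{t\to 0}\|t^E\|=0$ for every $E\in\mathrm{Exp}(P)$.) *)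

(* Defs.v *)
From HB Require Import structures.
From mathcomp Require Import all_boot all_order all_algebra.
From mathcomp Require Import all_classical all_reals all_analysis.
Set Implicit Arguments. Unset Strict Implicit. Unset Printing Implicit Defensive.
Import Order.TTheory GRing.Theory Num.Theory.
Import numFieldNormedType.Exports.
Local Open Scope classical_set_scope.
Local Open Scope ring_scope.

(* R^d is modelled by column vectors 'cV[R]_d, End(R^d) by 'M[R]_d acting by *m. *)

(* t^E := exp(log(t) E) = sum_{k>=0} (log t)^k / k! E^k, the limit of the
   partial sums in the normed space of d x d matrices. *)
Definition mxpowr (R : realType) (d : nat) (t : R) (E : 'M[R]_d) : 'M[R]_d :=
  lim ((fun n : nat => \sum_(0 <= k < n) (((ln t) ^+ k / (k`!)%:R) *: E ^+ k))
       @ \oo).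

Definition homogeneous_wrt (R : realType) (d : nat) (P : 'cV[R]_d -> R)
  (E : 'M[R]_d) : Prop :=
  forall (t : R) (xi : 'cV[R]_d), 0 < t -> P (mxpowr t E *m xi) = t * P xi.

Definition Exp (R : realType) (d : nat) (P : 'cV[R]_d -> R) : set 'M[R]_d :=
  [set E | homogeneous_wrt P E].

Definition positive_definite (R : realType) (d : nat) (P : 'cV[R]_d -> R) : Prop :=
  (forall xi, 0 <= P xi) /\ (forall xi, P xi = 0 -> xi = 0).

Definition unital_level_set (R : realType) (d : nat) (P : 'cV[R]_d -> R)
  : set 'cV[R]_d := [set eta | P eta = 1].

Definition positive_homogeneous (R : realType) (d : nat) (P : 'cV[R]_d -> R)
  : Prop :=
  continuous P /\ positive_definite P /\ Exp P !=set0 /\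
  compact (unital_level_set P).

Definition Sym (R : realType) (d : nat) (P : 'cV[R]_d -> R) : set 'M[R]_d :=
  [set O | forall xi : 'cV[R]_d, P (O *m xi) = P xi].

Definition compact_subgroup_GL (R : realType) (d : nat) (G : set 'M[R]_d)
  : Prop :=
  (forall O, G O -> O \in unitmx) /\
  G 1%:M /\
  (forall O1 O2, G O1 -> G O2 -> G (O1 *m O2)) /\
  (forall O, G O -> G (invmx O)) /\
  compact G.

(* Main.v *)
Require Import Defs.
From mathcomp Require Import all_boot all_order all_algebra.
From mathcomp Require Import all_classical all_reals all_analysis.
From mathcomp Require Import lra.
Set Implicit Arguments. Unset Strict Implicit. Unset Printing Implicit Defensive.
Import Order.TTheory GRing.Theory Num.Theory.
Import numFieldNormedType.Exports.
Local Open Scope classical_set_scope.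
Local Open Scope ring_scope.

Lemma mx_cont (R : realType) (T : topologicalType) m n (f : T -> 'M[R]_(m, n)) :
  (forall i j, continuous (fun x => f x i j)) -> continuous f.
Proof.
move=> fc x A /nbhs_ballP[e /= e0 eA].
have : \forall y \near x, forall ij : 'I_m * 'I_n,
    ball (f x ij.1 ij.2) e (f y ij.1 ij.2).
  apply: filter_forall => ij.
  exact: (fc ij.1 ij.2 x) _ (nbhsx_ballx _ _ e0).
apply: filterS => y H; apply: eA; split => // i j; exact: (H (i, j)).
Qed.

Lemma entry_le_norm (R : realType) m n (x : 'M[R]_(m, n)) i j : `|x i j| <= `|x|.
Proof.
rewrite [leRHS]/Num.norm /= mx_normrE.
by apply/bigmax_geP; right => /=; exists (i, j).
Qed.

Lemma mulmx_cont_l (R : realType) m n p (A : 'M[R]_(m, n)) :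
  continuous (fun x : 'M[R]_(n, p) => A *m x).
Proof.
apply: mx_cont => i j.
have -> : (fun x : 'M[R]_(n, p) => (A *m x) i j) =
          (fun x => \sum_(k < n) A i k * x k j).
  by rewrite funeqE => x; rewrite mxE.
apply: (@continuous_big R _ +%R 0 xpredT).
exact: (@add_continuous R).
move=> k _ x; apply: (@continuousM R 'M[R]_(n, p) (fun=> A i k) (fun x : 'M[R]_(n, p) => x k j)).
  exact: cst_continuous.
exact: coord_continuous.
Qed.

Lemma mulmx_cont_r (R : realType) m n p (B : 'M[R]_(n, p)) :
  continuous (fun x : 'M[R]_(m, n) => x *m B).
Proof.
apply: mx_cont => i j.
have -> : (fun x : 'M[R]_(m, n) => (x *m B) i j) =
          (fun x => \sum_(k < n) x i k * B k j).
  by rewrite funeqE => x; rewrite mxE.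
apply: (@continuous_big R _ +%R 0 xpredT) => //; first exact: (@add_continuous R).
move=> k _ x; apply: (@continuousM R 'M[R]_(m, n) (fun x : 'M[R]_(m, n) => x i k) (fun=> B k j)).
  exact: coord_continuous.
exact: cst_continuous.
Qed.

Lemma vec_mx_cont (R : realType) m n : continuous (@vec_mx R m n).
Proof.
apply: mx_cont => i j.
have -> : (fun x : 'rV[R]_(m * n) => vec_mx x i j) =
          (fun x => x 0 (mxvec_index i j)).
  by rewrite funeqE => x; rewrite mxE.
exact: coord_continuous.
Qed.

Lemma inj_unitmx (R : realType) d (A : 'M[R]_d) :
  (forall xi : 'cV[R]_d, A *m xi = 0 -> xi = 0) -> A \in unitmx.
Proof.
move=> H; rewrite -unitmx_tr -row_free_unit -kermx_eq0.
have K0 : (kermx A^T)^T = 0.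
  apply/matrixP => i j.
  have e : A *m (kermx A^T)^T = 0.
    by rewrite -[A in A *m _]trmxK -trmx_mul mulmx_ker trmx0.
  have := H (col j (kermx A^T)^T).
  rewrite colE mulmxA e mul0mx.
  move=> /(_ erefl) /(congr1 (fun v : 'cV[R]_d => v i 0)).
  by rewrite -colE !mxE.
by rewrite -[kermx _]trmxK K0 trmx0.
Qed.

Theorem mainTheorem1 (R : realType) (d : nat) (P : 'cV[R]_d -> R) :
  positive_homogeneous P -> compact_subgroup_GL (Sym P).
Proof.
move=> [Pc [[Pge Pdef] [[E HE] Scomp]]].
have P0 : P 0 = 0.
  have := HE 2 0; rewrite mulmx0 => /(_ (ltr0Sn _ _)) h; lra.
have Minj : forall t, 0 < t -> mxpowr t E \in unitmx.
  move=> t t0; apply: inj_unitmx => xi /(congr1 P); rewrite HE // P0 => /eqP.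
  by rewrite mulf_eq0 gt_eqF //= => /eqP; exact: Pdef.
have Lc : forall c, 0 < c -> compact [set xi | P xi = c].
  move=> c c0; set M := mxpowr c^-1 E.
  have cn0 : c != 0 by rewrite gt_eqF.
  have Mu : M \in unitmx by apply: Minj; rewrite invr_gt0.
  have -> : [set xi | P xi = c] =
      (fun eta => invmx M *m eta) @` unital_level_set P.
    apply/seteqP; split => [xi /= Pxi | _ [eta Peta <-]] /=.
    - exists (M *m xi); last by rewrite mulmxA mulVmx // mul1mx.
      by rewrite /unital_level_set /= HE ?invr_gt0 // Pxi mulVf.
    - have := HE c^-1 (invmx M *m eta); rewrite invr_gt0 => /(_ c0).
      rewrite -/M mulmxA mulmxV // mul1mx Peta => h.
      by rewrite -[LHS](mulVKf cn0) -h mulr1.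
  apply: continuous_compact; last exact: Scomp.
  by apply: continuous_subspaceT; exact: mulmx_cont_l.
have Sunit : forall O, Sym P O -> O \in unitmx.
  move=> O SO; apply: inj_unitmx => xi /(congr1 P); rewrite SO P0; exact: Pdef.
split; first exact: Sunit.
split; first by move=> xi; rewrite mul1mx.
split; first by move=> O1 O2 S1 S2 xi; rewrite -mulmxA S1 S2.
split.
  move=> O SO xi; rewrite -(SO (invmx O *m xi)).
  by rewrite mulmxA mulmxV ?Sunit // mul1mx.
set B := [set v : 'rV[R]_(d * d) | Sym P (vec_mx v)].
have -> : Sym P = vec_mx @` B.
  apply/seteqP; split => [Q SQ | _ [v Bv <-]] //.
  by exists (mxvec Q); rewrite /B /= mxvecK.
apply: continuous_compact; first exact/continuous_subspaceT/vec_mx_cont.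
apply: bounded_closed_compact.
- have cpos : forall j : 'I_d, 0 < P (delta_mx j 0).
    move=> j; rewrite lt0r Pge andbT; apply/eqP => /Pdef /matrixP /(_ j 0).
    by rewrite !mxE !eqxx /= => /eqP; rewrite oner_eq0.
  have Lb : forall j : 'I_d, \forall M \near +oo,
      forall x, P x = P (delta_mx j 0) -> `|x| <= M.
    move=> j; exact: (compact_bounded (Lc _ (cpos j))).
  have Lall := @filter_forall R 'I_d
    (fun j M => forall x, P x = P (delta_mx j 0) -> `|x| <= M) _ _ Lb.
  change (\forall M \near +oo, forall v, B v -> `|v| <= M).
  near=> M => v Bv.
  have HM : forall j x, P x = P (delta_mx j 0) -> `|x| <= M.
    by near: M; exact: Lall.
  have M0 : 0 <= M by near: M; exact: (nbhs_pinfty_ge (real0 R)).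
  have vO : v = mxvec (vec_mx v) by rewrite vec_mxK.
  rewrite [leLHS]/Num.norm /= mx_normrE.
  apply: bigmax_le => // -[a k] _ /=; rewrite (ord1 a).
  case/mxvec_indexP: k => i j.
  rewrite vO mxvecE.
  have := Bv (delta_mx j 0) => /HM h.
  apply: le_trans h; rewrite -colE.
  by apply: le_trans (entry_le_norm (col j (vec_mx v)) i 0); rewrite !mxE.
- have -> : B = \bigcap_(xi in setT) [set v | P (vec_mx v *m xi) = P xi].
    apply/seteqP; split => [v Bv xi _ | v Hv xi] //=; exact: Hv.
  apply: closed_bigI => xi _.
  have -> : [set v | P (vec_mx v *m xi) = P xi] =
      (fun v => P (vec_mx v *m xi)) @^-1` [set y | y = P xi] by [].
  apply: (proj1 (continuous_closedP _)); last exact: closed_eq.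
  have c1 : continuous (fun v : 'rV[R]_(d * d) => vec_mx v *m xi).
    move=> v; apply: (@continuous_comp 'rV[R]_(d * d) 'M[R]_d 'cV[R]_d (@vec_mx R d d) (fun O : 'M[R]_d => O *m xi)); first exact: vec_mx_cont.
    exact: mulmx_cont_r.
  move=> v; exact: (continuous_comp (c1 v) (Pc _)).
Unshelve. all: by end_near.
Qed.
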